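(* Let $\mathbb{A}\subseteq 2^\omega\times E^{[\infty]}$ be analytic, $P\subseteq 2^\omega$ a nonempty perfect set, and $X\in E^{[\infty]}$. If for every $f\in P$ player I has a strategy in $F[X]$ for playing out of $\mathbb{A}_f=\{Y:(f,Y)\in\mathbb{A}\}$, then there are a nonempty perfect $Q\subseteq P$ and a strategy $\sigma$ for I in $F[X]$ such that $Q\times[\sigma]\subseteq(2^\omega\times E^{[\infty]})\setminus\mathbb{A}$.
   Context: $F$ is a countable field and $E$ a countably infinite-dimensional $F$-vector space with fixed basis $(e_n)$; $\mathrm{supp}(v)$ is the set of indices of nonzero coefficients of $v\ne0$. A block sequence is a sequence $(x_n)$ of nonzero vectors with $\max\mathrm{supp}(x_n)<\min\mathrm{supp}(x_{n+1})$; $E^{[\infty]}$ is the Polish space of infinite block sequences (subspace of $E^\omega$, $E$ discrete). $\langle X\rangle$ is the span of $X$. The asymptotic game $F[X]$: I plays natural numbers $n_k$, II responds with nonzero $y_k\in\langle X\rangle$ with $n_k<\min\mathrm{supp}(y_k)$, II's moves forming a block sequence $(y_k)$, the outcome. A strategy for I is a function from finite sequences of II's previous moves to natural numbers; I plays out of a set $\mathbb{B}$ with a strategy if all outcomes of plays following it lie outside $\mathbb{B}$; $[\sigma]$ is the set of outcomes of plays in which I follows $\sigma$. *)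

(* Defs.v *)
From HB Require Import structures.
From mathcomp Require Import all_boot all_order all_algebra.
Set Implicit Arguments. Unset Strict Implicit. Unset Printing Implicit Defensive.
Import GRing.Theory.
Local Open Scope ring_scope.

(* E is modelled as {poly F}: finitely supported coefficient sequences,
   basis e_n = 'X^n, coefficient of e_n in v is v`_n. *)

Section Defs.
Variable F : countFieldType.
Local Notation E := {poly F}.

(* n < min supp(y)  (y nonzero is required separately) *)
Definition above (n : nat) (y : E) : Prop := forall i, (i <= n)%N -> y`_i = 0.

Definition supp_lt (x y : E) : Prop :=
  forall i j, x`_i != 0 -> y`_j != 0 -> (i < j)%N.

Definition block_seq (x : nat -> E) : Prop :=
  forall n, x n != 0 /\ supp_lt (x n) (x n.+1).

Definition in_span (X : nat -> E) (y : E) : Prop :=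
  exists s : seq F, y = \sum_(i < size s) s`_i *: X i.

Definition strategyI := seq E -> nat.

Definition outcomes (X : nat -> E) (sigma : strategyI) (Y : nat -> E) : Prop :=
  block_seq Y /\
  forall k, in_span X (Y k) /\ above (sigma (mkseq Y k)) (Y k).

Definition plays_out_of (X : nat -> E) (sigma : strategyI) (B : (nat -> E) -> Prop) :=
  forall Y, outcomes X sigma Y -> ~ B Y.
End Defs.

(* topology of 2^omega, omega^omega, E^omega: products of discrete spaces *)
Definition agree {T : Type} (n : nat) (x y : nat -> T) : Prop :=
  forall i, (i < n)%N -> x i = y i.

Definition continuous_baire {T U : Type} (g : (nat -> nat) -> (nat -> T) * (nat -> U)) :=
  forall x n, exists m, forall x', agree m x' x ->
    agree n (g x').1 (g x).1 /\ agree n (g x').2 (g x).2.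

Definition analytic {T U : Type} (A : (nat -> T) * (nat -> U) -> Prop) : Prop :=
  (forall p, ~ A p) \/
  exists g : (nat -> nat) -> (nat -> T) * (nat -> U),
    continuous_baire g /\ forall p, A p <-> exists x, g x = p.

Definition closed_cantor (P : (nat -> bool) -> Prop) : Prop :=
  forall f, (forall n, exists g, P g /\ agree n g f) -> P f.
Definition perfect_cantor (P : (nat -> bool) -> Prop) : Prop :=
  closed_cantor P /\
  forall f, P f -> forall n, exists g, P g /\ g <> f /\ agree n g f.

(* Main.v *)
Require Import Defs.
From mathcomp Require Import all_boot all_order all_algebra.
From Stdlib Require Import ClassicalEpsilon Classical FunctionalExtensionality Lia.
From mathcomp Require Import zify.
Set Implicit Arguments. Unset Strict Implicit. Unset Printing Implicit Defensive.

Definition cset := (nat -> bool) -> Prop.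
Definition subs (A B : cset) := forall f, A f -> B f.
Definition pnp (Q : cset) := perfect_cantor Q /\ exists f, Q f.
Definition sub_pnp (A B : cset) := subs A B /\ pnp A.
Definition cone (Q : cset) (h : nat -> bool) (m : nat) : cset :=
  fun g => Q g /\ agree m g h.

Lemma agree_refl T m (x : nat -> T) : agree m x x.
Proof. by []. Qed.
Lemma agree_sym T m (x y : nat -> T) : agree m x y -> agree m y x.
Proof. by move=> H i Hi; rewrite H. Qed.
Lemma agree_trans T m (x y z : nat -> T) : agree m x y -> agree m y z -> agree m x z.
Proof. by move=> H1 H2 i Hi; rewrite H1 // H2. Qed.
Lemma agree_le T m n (x y : nat -> T) : m <= n -> agree n x y -> agree m x y.
Proof. by move=> Hmn H i Hi; apply: H; apply: leq_trans Hmn. Qed.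

Lemma sub_pnp_trans A B C : sub_pnp A B -> subs B C -> sub_pnp A C.
Proof. by move=> [H1 H2] H3; split => // f /H1 /H3. Qed.

Lemma pnp_cone Q h m : pnp Q -> Q h -> pnp (cone Q h m).
Proof.
move=> [[Hc Hp] _] Qh; split; last by exists h; split.
split.
- move=> f Hf; split.
  + apply: Hc => n; have [g [[Qg _] Hg]] := Hf n; by exists g.
  + have [g [[_ Hgh] Hg]] := Hf m.
    by apply: agree_trans Hgh; apply: agree_sym.
- move=> f [Qf Hfh] n.
  have [g [Qg [Hgf Ha]]] := Hp f Qf (maxn n m).
  exists g; split; last split => //.
  + split => //; apply: agree_trans Hfh; apply: agree_le Ha; exact: leq_maxr.
  + apply: agree_le Ha; exact: leq_maxl.
Qed.

Fixpoint allbool (i : nat) : list (seq bool) :=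
  match i with
  | 0 => [:: [::]]
  | i'.+1 => List.flat_map (fun s => [:: true :: s; false :: s]) (allbool i')
  end.

Lemma allboolP s : List.In s (allbool (size s)).
Proof.
elim: s => [|b s IH] /=; first by left.
apply/List.in_flat_map; exists s; split => //.
by case: b; [left|right; left].
Qed.

Lemma allbool_size i s : List.In s (allbool i) -> size s = i.
Proof.
elim: i s => [|i IH] s /=; first by case=> // <-.
move/List.in_flat_map => [s' [Hs' Hin]].
by case: Hin => [<-|[<-|//]] /=; rewrite IH.
Qed.

Section Fusion.
Variable Q0 : cset.
Variable K : nat -> cset -> Prop.
Hypothesis HQ0 : pnp Q0.
Hypothesis Hdense : forall i L, sub_pnp L Q0 -> exists L', sub_pnp L' L /\ K i L'.

Let inhB : inhabited (nat -> bool) := inhabits (fun _ => false).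
Let inhS : inhabited cset := inhabits (fun _ => False).
Let inhN : inhabited nat := inhabits 0.

Definition refineR (i : nat) (R : cset) : cset :=
  epsilon inhS (fun L' => sub_pnp L' R /\ K i L').

Definition fpt1 (R : cset) := epsilon inhB (fun f => R f).
Definition fpt2 (R : cset) := epsilon inhB (fun f => R f /\ f <> fpt1 R).
Definition fdif (R : cset) := epsilon inhN (fun d => fpt1 R d <> fpt2 R d).

Definition child (b : bool) (R' : cset) : (nat -> bool) * nat * cset :=
  let c := if b then fpt2 R' else fpt1 R' in
  (c, (fdif R').+1, cone R' c (fdif R').+1).

Fixpoint node (s : seq bool) : (nat -> bool) * nat * cset :=
  match s with
  | [::] => (fun _ => false, 0, Q0)
  | b :: s' => child b (refineR (size s') (node s').2)
  end.

Definition nh s := (node s).1.1.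
Definition nlen s := (node s).1.2.
Definition nR s := (node s).2.
Definition nR' s := refineR (size s) (nR s).

Definition NInv s := pnp (nR s) /\ subs (nR s) Q0 /\
  subs (nR s) (fun g => agree (nlen s) g (nh s)) /\ size s <= nlen s.

Lemma NInv_nil : NInv [::].
Proof. by rewrite /NInv /nR /nlen /=; split => //; split => //. Qed.

Lemma nR'_spec s : NInv s -> sub_pnp (nR' s) (nR s) /\ K (size s) (nR' s).
Proof.
move=> [H1 [H2 _]].
have Hsp := epsilon_spec inhS (fun L' => sub_pnp L' (nR s) /\ K (size s) L'); apply: Hsp.
exact: (Hdense (size s) (conj H2 H1)).
Qed.

Lemma split_spec (R : cset) : pnp R ->
  R (fpt1 R) /\ R (fpt2 R) /\ fpt1 R (fdif R) <> fpt2 R (fdif R).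
Proof.
move=> [[Hc Hp] Hne].
have H1 : R (fpt1 R) by apply: (epsilon_spec inhB (fun f => R f)).
have H2 : R (fpt2 R) /\ fpt2 R <> fpt1 R.
  apply: (epsilon_spec inhB (fun f => R f /\ f <> fpt1 R)).
  have [g [Rg [gne _]]] := Hp _ H1 0; by exists g.
split => //; split; first by case: H2.
have: exists d, fpt1 R d <> fpt2 R d.
  apply: NNPP => Hn; case: H2 => _ []; apply: functional_extensionality => d.
  by apply: NNPP => Hd; apply: Hn; exists d => Hx; apply: Hd; rewrite Hx.
by move=> Hex; apply: (epsilon_spec inhN (fun d => fpt1 R d <> fpt2 R d)).
Qed.

Lemma node_cons b s : nR (b :: s) = cone (nR' s) (nh (b :: s)) (nlen (b :: s)).
Proof. by []. Qed.

Lemma NInv_cons b s : NInv s -> [/\ NInv (b :: s), subs (nR (b :: s)) (nR' s),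
  subs (fun g => agree (nlen (b :: s)) g (nh (b :: s)))
       (fun g => agree (nlen s) g (nh s)) & nR (b :: s) (nh (b :: s))].
Proof.
move=> Hs; have [[Hsub Hpnp] _] := nR'_spec Hs.
have [Q1 [Q2 Hd]] := split_spec Hpnp.
case: (Hs) => [Hp [HQ [Hcone Hsize]]].
set R' := nR' s.
have Hlen : nlen s <= fdif R'.
  rewrite leqNgt; apply/negP => Hlt; apply: Hd.
  have A1 := Hcone _ (Hsub _ Q1); have A2 := Hcone _ (Hsub _ Q2).
  by rewrite A1 // A2.
have Hc : (if b then fpt2 R' else fpt1 R') = nh (b :: s) by [].
have Hcin : R' (nh (b :: s)) by rewrite -Hc; case: b {Hc}.
have Hl : nlen (b :: s) = (fdif R').+1 by [].
split.
- split; first by rewrite node_cons; apply: pnp_cone.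
  split; first by move=> g; rewrite node_cons => -[/Hsub /HQ].
  split; first by move=> g; rewrite node_cons => -[].
  by rewrite /= Hl ltnS; apply: leq_trans Hsize Hlen.
- by move=> g; rewrite node_cons => -[].
- move=> g Hg; apply: agree_trans (Hcone _ (Hsub _ Hcin)).
  by apply: agree_le Hg; rewrite Hl; apply: leq_trans Hlen _.
- by rewrite node_cons; split.
Qed.

Lemma NInv_all s : NInv s.
Proof. elim: s => [|b s IH]; [exact: NInv_nil | by case: (NInv_cons b IH)]. Qed.

Lemma cone_nest b s : subs (fun g => agree (nlen (b :: s)) g (nh (b :: s)))
       (fun g => agree (nlen s) g (nh s)).
Proof. by case: (NInv_cons b (NInv_all s)). Qed.

Lemma center_in b s : nR (b :: s) (nh (b :: s)).
Proof. by case: (NInv_cons b (NInv_all s)). Qed.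

Lemma R_nest b s : subs (nR (b :: s)) (nR s).
Proof.
case: (NInv_cons b (NInv_all s)) => _ H _ _ g /H.
by case: (nR'_spec (NInv_all s)) => -[H1 _] _ /H1.
Qed.

Lemma R_in_cone s : subs (nR s) (fun g => agree (nlen s) g (nh s)).
Proof. by case: (NInv_all s) => _ [_ []]. Qed.

Lemma sibling_disj s g : agree (nlen (true :: s)) g (nh (true :: s)) ->
  agree (nlen (false :: s)) g (nh (false :: s)) -> False.
Proof.
have [[_ Hpnp] _] := nR'_spec (NInv_all s).
have [_ [_ Hd]] := split_spec Hpnp.
move=> H1 H2; apply: Hd.
have E1 : g (fdif (nR' s)) = fpt2 (nR' s) (fdif (nR' s)) := H1 _ (ltnSn _).
have E2 : g (fdif (nR' s)) = fpt1 (nR' s) (fdif (nR' s)) := H2 _ (ltnSn _).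
by rewrite -E1 -E2.
Qed.

Lemma uniq_level s1 s2 g : size s1 = size s2 ->
  agree (nlen s1) g (nh s1) -> agree (nlen s2) g (nh s2) -> s1 = s2.
Proof.
elim: s1 s2 => [|b1 s1 IH] [|b2 s2] //= [Hsz] H1 H2.
have E : s1 = s2 by apply: IH Hsz (cone_nest H1) (cone_nest H2).
subst s2; congr (_ :: _).
case: b1 b2 H1 H2 => [] [] // H1 H2; exfalso.
- exact: sibling_disj H1 H2.
- exact: sibling_disj H2 H1.
Qed.

Lemma uniq_levelR s1 s2 g : size s1 = size s2 -> nR s1 g -> nR s2 g -> s1 = s2.
Proof.
move=> Hs H1 H2; apply: uniq_level Hs (R_in_cone H1) (R_in_cone H2).
Qed.

Definition Qs : cset := fun f => forall n, exists s, size s = n /\ nR s f.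

Lemma R_nest_drop s k : subs (nR s) (nR (drop k s)).
Proof.
elim: s k => [|b s IH] [|k] //= g Hg.
by apply: IH; apply: R_nest Hg.
Qed.

Lemma R_nest_cat t s : subs (nR (t ++ s)) (nR s).
Proof.
move=> g Hg; have := R_nest_drop (size t) Hg; by rewrite drop_size_cat.
Qed.

Lemma point_in s0 : exists g, Qs g /\ nR s0 g.
Proof.
pose sz k := nseq k false ++ s0.
have Hnest : forall N M, N <= M -> subs (nR (sz M)) (nR (sz N)).
  move=> N M HNM; have -> : sz M = nseq (M - N) false ++ sz N.
    by rewrite /sz catA -nseqD subnK.
  exact: R_nest_cat.
pose g := fun k => nh (sz k.+1) k.
have Hall : forall N, nR (sz N) g.
  move=> N; case: (NInv_all (sz N)) => [[[Hc _] _] _].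
  apply: Hc => m; exists (nh (sz (maxn N m).+1)); split.
    apply: (Hnest N (maxn N m).+1); first by apply: leq_trans (leq_maxl N m) _.
    exact: center_in.
  move=> k Hk; rewrite /g.
  have Hin : nR (sz k.+1) (nh (sz (maxn N m).+1)).
    apply: (Hnest k.+1 (maxn N m).+1); last exact: center_in.
    by rewrite ltnS; apply: leq_trans (leq_maxr N m); apply: ltnW.
  apply: (R_in_cone Hin).
  case: (NInv_all (sz k.+1)) => _ [_ [_ Hs]].
  by apply: leq_trans Hs; rewrite /sz size_cat size_nseq; apply: leq_addr.
exists g; split; last exact: (Hall 0).
move=> n; case: (leqP (size s0) n) => Hn.
- exists (sz (n - size s0)); split; last exact: Hall.
  by rewrite /sz size_cat size_nseq subnK.
- exists (drop (size s0 - n) s0); split.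
    by rewrite size_drop; lia.
  exact (R_nest_drop (size s0 - n) (Hall 0)).
Qed.

Lemma Qs_sub : subs Qs Q0.
Proof. by move=> f /(_ 0) [s [/size0nil -> H]]. Qed.

Lemma Qs_level f n : Qs f -> exists s, size s = n /\ nR s f.
Proof. by move=> H; apply: H. Qed.

Lemma Qs_closed : closed_cantor Qs.
Proof.
move=> f Hf.
suff H : forall n, exists s, size s = n /\ forall m, exists g, Qs g /\ nR s g /\ agree m g f.
  move=> n; have [s [Hs Hall]] := H n; exists s; split => //.
  case: (NInv_all s) => [[[Hc _] _] _]; apply: Hc => m.
  by have [g [_ [Hg Ha]]] := Hall m; exists g.
elim=> [|n [s [Hs Hall]]].
  exists [::]; split => // m; have [g [Qg Ha]] := Hf m.
  by exists g; split => //; split => //; apply: Qs_sub.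
have Hlev : forall m, exists b g, Qs g /\ nR (b :: s) g /\ agree m g f.
  move=> m; have [g [Qg [Rg Ha]]] := Hall m.
  have [[|b s'] [Hs' Rg']] := Qs_level n.+1 Qg => //.
  have E : s' = s.
    apply: (uniq_levelR (g := g)); first by case: Hs' => ->.
    - exact: R_nest Rg'.
    - exact: Rg.
  by subst s'; exists b, g.
case: (classic (forall m, exists g, Qs g /\ nR (true :: s) g /\ agree m g f)) => Ht.
  by exists (true :: s); split => //=; rewrite Hs.
have [m0 Hm0] := not_all_ex_not _ _ Ht.
exists (false :: s); split; first by rewrite /= Hs.
move=> m; have [b [g [Qg [Rg Ha]]]] := Hlev (maxn m m0).
case: b Rg => Rg.
- exfalso; apply: Hm0; exists g; split => //; split => //.
  apply: agree_le Ha; exact: leq_maxr.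
- exists g; split => //; split => //; apply: agree_le Ha; exact: leq_maxl.
Qed.

Lemma Qs_perfect : perfect_cantor Qs.
Proof.
split; first exact: Qs_closed.
move=> f Qf m.
have [[|b s] [Hs Rf]] := Qs_level m.+1 Qf => //.
have [g [Qg Rg]] := point_in (~~ b :: s).
exists g; split => //; split.
- move=> E; subst g.
  have := uniq_levelR (s1 := b :: s) (s2 := ~~ b :: s) erefl Rf Rg.
  by case; case: b {Rf Rg Hs}.
- case: Hs => Hs.
  have A1 := R_in_cone (R_nest Rf); have A2 := R_in_cone (R_nest Rg).
  case: (NInv_all s) => _ [_ [_ Hsz]].
  apply: agree_le (agree_trans A2 (agree_sym A1)).
  by rewrite -Hs.
Qed.

Lemma fusion_main : sub_pnp Qs Q0 /\ forall i, exists l : list cset,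
  (forall L, List.In L l -> K i L) /\
  forall f, Qs f -> exists L, List.In L l /\ exists m, forall g, Qs g -> agree m g f -> L g.
Proof.
split.
  split; first exact: Qs_sub.
  split; first exact: Qs_perfect.
  by have [g [Qg _]] := point_in [::]; exists g.
move=> i; exists (List.map nR' (allbool i)); split.
  move=> L /List.in_map_iff [s [<- Hs]].
  by rewrite -(allbool_size Hs); case: (nR'_spec (NInv_all s)).
move=> f Qf.
have [[|b s] [Hs Rf]] := Qs_level i.+1 Qf => //.
exists (nR' s); split.
  apply: List.in_map; case: Hs => <-; exact: allboolP.
exists (nlen (b :: s)) => g Qg Ha.
have [s2 [Hs2 Rg]] := Qs_level i.+1 Qg.
have E : s2 = b :: s.
  apply: (uniq_level (g := g)); first by rewrite Hs2 Hs.
  - exact: R_in_cone Rg.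
  - exact: agree_trans Ha (R_in_cone Rf).
subst s2.
by case: (NInv_cons b (NInv_all s)) => _ H _ _; apply: H.
Qed.
End Fusion.
Import GRing.Theory.

Definition pre (t t2 : seq nat) := exists s, t2 = t ++ s.

Lemma pre_refl t : pre t t. Proof. by exists [::]; rewrite cats0. Qed.
Lemma pre_trans a b c : pre a b -> pre b c -> pre a c.
Proof. by move=> [s1 ->] [s2 ->]; exists (s1 ++ s2); rewrite catA. Qed.
Lemma pre_size a b : pre a b -> size a <= size b.
Proof. by move=> [s ->]; rewrite size_cat leq_addr. Qed.
Lemma pre_neq a b : pre a b -> b <> a -> size a < size b.
Proof.
move=> [s ->] Hne; rewrite size_cat -{1}(addn0 (size a)) ltn_add2l lt0n size_eq0.
by apply/negP => /eqP E; apply: Hne; rewrite E cats0.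
Qed.
Lemma pre_nth a b i : pre a b -> i < size a -> nth 0 b i = nth 0 a i.
Proof. by move=> [s ->] Hi; rewrite nth_cat Hi. Qed.

Lemma mkseq_pre (T : Type) (x : nat -> T) a b : a <= b ->
  exists s, mkseq x b = mkseq x a ++ s.
Proof.
move=> Hab; exists [seq x i | i <- iota a (b - a)].
by rewrite /mkseq -map_cat -{1}(subnKC Hab) iotaD.
Qed.

Lemma take_mkseq' (T : Type) (x : nat -> T) j k : j <= k -> take j (mkseq x k) = mkseq x j.
Proof.
move=> Hjk; have [s ->] := mkseq_pre x Hjk.
by rewrite take_cat size_mkseq ltnn subnn take0 cats0.
Qed.

Lemma mkseq_ext (T : Type) (x y : nat -> T) k : agree k x y -> mkseq x k = mkseq y k.
Proof. by move=> H; rewrite /mkseq; apply/eq_in_map => i; rewrite mem_iota add0n => /andP [_ /H]. Qed.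

(* revealed prefix of a witness at round k *)
Definition rlen (x : nat -> nat) (k : nat) := find (fun d => k < d) (mkseq x k).
Definition reveal (x : nat -> nat) (k : nat) := mkseq x (rlen x k).

Lemma rlen_le x k : rlen x k <= k.
Proof. by rewrite /rlen; apply: leq_trans (find_size _ _) _; rewrite size_mkseq. Qed.

Lemma rlen_small x k i : i < rlen x k -> x i <= k.
Proof.
move=> Hi; have := before_find 0 Hi; rewrite nth_mkseq; last exact: leq_trans Hi (rlen_le x k).
by move/negbT; rewrite -leqNgt.
Qed.

Lemma rlen_big x k : rlen x k < k -> k < x (rlen x k).
Proof.
move=> Hlt.
have Hh : has (fun d => k < d) (mkseq x k) by rewrite has_find size_mkseq.
by have := nth_find 0 Hh; rewrite nth_mkseq.
Qed.

Lemma rlen_mono x k : rlen x k <= rlen x k.+1.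
Proof.
rewrite leqNgt; apply/negP => Hlt.
have H1 : rlen x k.+1 < k.+1 by have := rlen_le x k; lia.
have := rlen_big H1; have := rlen_small Hlt; lia.
Qed.

Lemma rlen_mono' x a b : a <= b -> rlen x a <= rlen x b.
Proof.
move=> Hab; rewrite -(subnKC Hab); elim: (b - a) => [|d IH]; first by rewrite addn0.
by apply: leq_trans IH _; rewrite addnS rlen_mono.
Qed.

Fixpoint bnd (x : nat -> nat) (m : nat) := if m is m'.+1 then maxn (bnd x m') (x m') else 0.
Lemma bnd_ge x m i : i < m -> x i <= bnd x m.
Proof.
elim: m => [//|m IH] /=; rewrite ltnS leq_eqVlt => /orP [/eqP ->|Hi].
  exact: leq_maxr.
by apply: leq_trans (IH Hi) (leq_maxl _ _).
Qed.

Lemma rlen_unb x m : m <= rlen x (maxn m (bnd x m)).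
Proof.
set k := maxn m (bnd x m).
rewrite leqNgt; apply/negP => Hlt.
have H1 : rlen x k < k by apply: leq_trans Hlt (leq_maxl _ _).
have := rlen_big H1; have := bnd_ge x Hlt; have : bnd x m <= k by apply: leq_maxr.
lia.
Qed.

Lemma reveal_nth x k i : i < size (reveal x k) -> nth 0 (reveal x k) i = x i.
Proof. by rewrite size_mkseq => Hi; rewrite nth_mkseq. Qed.

Lemma reveal_pre x a b : a <= b -> pre (reveal x a) (reveal x b).
Proof. by move=> Hab; apply: mkseq_pre; apply: rlen_mono'. Qed.

Lemma reveal_size x k : size (reveal x k) = rlen x k.
Proof. by rewrite size_mkseq. Qed.

Lemma reveal0 x : reveal x 0 = [::].
Proof. by rewrite /reveal; have := rlen_le x 0; rewrite leqn0 => /eqP ->. Qed.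

Fixpoint cands (k n : nat) : list (seq nat) :=
  match n with
  | 0 => [:: [::]]
  | n'.+1 => List.flat_map (fun a => List.map (cons a) (cands k n')) (iota 0 k.+1)
  end.
Definition Tk (k : nat) : list (seq nat) := List.flat_map (cands k) (iota 0 k.+1).

Lemma inP' (T : eqType) (a : T) (s : seq T) : a \in s -> List.In a s.
Proof.
elim: s => [//|b s IH]; rewrite in_cons => /orP [/eqP ->|H]; [by left | by right; apply: IH].
Qed.

Lemma cands_in k s : all (fun a => a <= k) s -> List.In s (cands k (size s)).
Proof.
elim: s => [|a s IH]; first by left.
move=> /andP [Ha Hs].
change (List.In (a :: s) (List.flat_map (fun a0 => List.map (cons a0) (cands k (size s))) (iota 0 k.+1))).
apply/List.in_flat_map; exists a; split.
  by apply: inP'; rewrite mem_iota add0n ltnS Ha.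
by apply: List.in_map; apply: IH.
Qed.

Lemma Tk_in k s : size s <= k -> all (fun a => a <= k) s -> List.In s (Tk k).
Proof.
move=> Hs Ha; apply/List.in_flat_map; exists (size s); split; last exact: cands_in.
by apply: inP'; rewrite mem_iota add0n ltnS.
Qed.

Lemma reveal_Tk x k : List.In (reveal x k) (Tk k).
Proof.
apply: Tk_in; first by rewrite reveal_size rlen_le.
apply/allP => a /mapP [i]; rewrite mem_iota add0n => /andP [_ Hi] ->.
exact: rlen_small.
Qed.

Definition bmax (A : Type) (l : list A) (G : A -> nat) :=
  List.fold_right (fun a m => maxn (G a) m) 0 l.
Lemma bmax_ge (A : Type) (l : list A) (G : A -> nat) a : List.In a l -> G a <= bmax l G.
Proof.
elim: l => [//|b l IH] /= [->|H]; first exact: leq_maxl.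
by apply: leq_trans (IH H) (leq_maxr _ _).
Qed.

Lemma bmax_ge' (A : Type) (l : list A) (G : A -> nat) a n :
  List.In a l -> n <= G a -> n <= bmax l G.
Proof. by move=> H1 H2; apply: leq_trans H2 (bmax_ge _ H1). Qed.

Lemma in_iota' j k : j <= k -> List.In j (iota 0 k.+1).
Proof. by move=> H; apply: inP'; rewrite mem_iota add0n ltnS. Qed.

Lemma above_mono (F : countFieldType) (m n : nat) (y : {poly F}) :
  m <= n -> above n y -> above m y.
Proof. by move=> Hmn H i Hi; apply: H; apply: leq_trans Hmn. Qed.
Import GRing.Theory.

Section Main.
Variable F : countFieldType.
Local Notation E := {poly F}.
Variable X : nat -> E.
Variable g : (nat -> nat) -> (nat -> bool) * (nat -> E).

Definition valid (p : seq E) (y : E) :=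
  (y != 0)%R /\ in_span X y /\ (0 < size p -> supp_lt (last 0%R p) y).

Definition Out (sg : strategyI F) (p : seq E) (Y : nat -> E) :=
  [/\ forall i, i < size p -> Y i = nth 0%R p i, block_seq Y,
      forall k, in_span X (Y k) & forall k, size p <= k -> above (sg (mkseq Y k)) (Y k)].

Definition Kill (sg : strategyI F) (Q : cset) (p : seq E) (t : seq nat) :=
  forall f Y x, Q f -> Out sg p Y -> reveal x (size p) = t -> g x = (f, Y) -> False.

Definition bad (Q : cset) (p : seq E) (t : seq nat) :=
  forall Q' sg, sub_pnp Q' Q -> ~ Kill sg Q' p t.

Inductive HRT (Q : cset) (p : seq E) (t : seq nat) : Type :=
  HRTmk (ch : cset -> nat -> E) (ct : cset -> nat -> seq nat) (cQ : cset -> nat -> cset)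
    (Hc : forall Q' n, sub_pnp Q' Q ->
       [/\ valid p (ch Q' n), above n (ch Q' n), pre t (ct Q' n), sub_pnp (cQ Q' n) Q'
         & ct Q' n <> t -> bad (cQ Q' n) (rcons p (ch Q' n)) (ct Q' n)])
    (sub : forall Q' n, sub_pnp Q' Q -> ct Q' n = t -> HRT (cQ Q' n) (rcons p (ch Q' n)) t).

Definition Phi (Q : cset) (p : seq E) (t : seq nat) (n : nat) :=
  forall y t2 Q2, valid p y -> above n y -> pre t t2 -> sub_pnp Q2 Q ->
    (t2 <> t -> ~ bad Q2 (rcons p y) t2) /\ (t2 = t -> ~ inhabited (HRT Q2 (rcons p y) t)).

Lemma subs_refl (Q : cset) : subs Q Q. Proof. by []. Qed.
Lemma subs_trans (A B C : cset) : subs A B -> subs B C -> subs A C.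
Proof. by move=> H1 H2 f /H1 /H2. Qed.

Lemma bad_mono Q Q1 p t : subs Q1 Q -> bad Q p t -> bad Q1 p t.
Proof. by move=> H Hb Q' sg HQ'; apply: Hb; apply: sub_pnp_trans HQ' H. Qed.

Lemma Kill_mono sg Q Q1 p t : subs Q1 Q -> Kill sg Q p t -> Kill sg Q1 p t.
Proof. by move=> H HK f Y x /H; apply: HK. Qed.

Definition HRT_mono Q Q1 p t (H : subs Q1 Q) (T : HRT Q p t) : HRT Q1 p t :=
  match T with
  | HRTmk ch ct cQ Hc sub =>
      HRTmk (fun Q' n HQ' => Hc Q' n (sub_pnp_trans HQ' H))
            (fun Q' n HQ' e => sub Q' n (sub_pnp_trans HQ' H) e)
  end.

Lemma HRT_mono' Q Q1 p t : subs Q1 Q -> inhabited (HRT Q p t) -> inhabited (HRT Q1 p t).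
Proof. by move=> H [T]; constructor; exact: HRT_mono H T. Qed.

Let inhE : inhabited E := inhabits 0%R.
Let inhS : inhabited cset := inhabits (fun _ => False).

Definition ext_inh (A : Type) (H : inhabited A) : A := epsilon H (fun _ => True).

Lemma unfoldNR Q p t : ~ inhabited (HRT Q p t) ->
  exists Q' n, sub_pnp Q' Q /\ Phi Q' p t n.
Proof.
move=> NH; apply: NNPP => Hn; apply: NH.
pose Spec Q' n (w : E * seq nat * cset) :=
  [/\ valid p w.1.1, above n w.1.1, pre t w.1.2, sub_pnp w.2 Q' &
     (w.1.2 <> t /\ bad w.2 (rcons p w.1.1) w.1.2) \/
     (w.1.2 = t /\ inhabited (HRT w.2 (rcons p w.1.1) t))].
have inhW : inhabited (E * seq nat * cset) := inhabits (0%R, [::], fun _ => False).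
pose W Q' n := epsilon inhW (Spec Q' n).
have HW : forall Q' n, sub_pnp Q' Q -> Spec Q' n (W Q' n).
  move=> Q' n HQ'; apply: epsilon_spec.
  apply: NNPP => Hne; apply: Hn; exists Q', n; split => // y t2 Q2 Hv Ha Hp HQ2.
  split.
  - move=> Hne2 Hb; apply: Hne; exists (y, t2, Q2); split => //; by left.
  - move=> Heq Hh; apply: Hne; exists (y, t2, Q2); split => //; by right.
have Hsub : forall Q' n, sub_pnp Q' Q -> (W Q' n).1.2 = t ->
    inhabited (HRT (W Q' n).2 (rcons p (W Q' n).1.1) t).
  move=> Q' n HQ' e; have [_ _ _ _ [[Hne _]|[_ Hh]]] := HW Q' n HQ' => //.
constructor.
apply: (@HRTmk Q p t (fun Q' n => (W Q' n).1.1) (fun Q' n => (W Q' n).1.2) (fun Q' n => (W Q' n).2)).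
- move=> Q' n HQ'; have [H1 H2 H3 H4 H5] := HW Q' n HQ'; split => // Hne.
  by case: H5 => [[_ Hb]|[He _]].
- move=> Q' n HQ' e; exact: ext_inh (Hsub Q' n HQ' e).
Qed.

Lemma Out_prefix sg p Y : Out sg p Y -> p = mkseq Y (size p).
Proof.
move=> [H _ _ _]; apply: (@eq_from_nth _ 0%R); first by rewrite size_mkseq.
by move=> i Hi; rewrite nth_mkseq // H.
Qed.

Lemma last_mkseq' (Y : nat -> E) j : 0 < j -> last 0%R (mkseq Y j) = Y j.-1.
Proof. by case: j => // j _; rewrite mkseqS last_rcons. Qed.

Lemma Out_valid sg p Y j : Out sg p Y -> valid (mkseq Y j) (Y j).
Proof.
move=> [_ Hb Hs _]; split; first by case: (Hb j).
split => //; rewrite size_mkseq => Hj; rewrite last_mkseq' //.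
by case: j Hj => // j _; case: (Hb j).
Qed.

Lemma Out_shift sg sg' p Y k : Out sg p Y -> size p <= k ->
  (forall k', k <= k' -> sg' (mkseq Y k') <= sg (mkseq Y k')) -> Out sg' (mkseq Y k) Y.
Proof.
move=> [H1 H2 H3 H4] Hk Hle; split => //.
- by move=> i; rewrite size_mkseq => Hi; rewrite nth_mkseq.
- move=> k'; rewrite size_mkseq => Hk'; apply: above_mono (Hle _ Hk') _.
  by apply: H4; apply: leq_trans Hk Hk'.
Qed.

Let inhN : inhabited nat := inhabits 0.
Let inhSg : inhabited (strategyI F) := inhabits (fun _ => 0).
Let inhL : inhabited (list cset) := inhabits nil.

Lemma bad_HRT Q p t : bad Q p t -> inhabited (HRT Q p t).
Proof.
move=> Hbad; apply: NNPP => NH.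
have [Q0 [n0 [HQ0 HPhi]]] := unfoldNR NH.
pose KA (r : seq E) (L : cset) := inhabited (HRT L r t) \/ exists n, Phi L r t n.
pose KB (r : seq E) (t2 : seq nat) (L : cset) := bad L r t2 \/ exists sg, Kill sg L r t2.
pose Kt (i : nat) : cset -> Prop :=
  match @unpickle (seq E * option (seq nat))%type i with
  | Some (r, None) => KA r
  | Some (r, Some t2) => KB r t2
  | None => fun _ => True
  end.
have Hpnp0 : pnp Q0 by case: HQ0.
have Hdense : forall i L, sub_pnp L Q0 -> exists L', sub_pnp L' L /\ Kt i L'.
  move=> i L HL; have HLL : sub_pnp L L by split => //; case: HL.
  rewrite /Kt; case: (unpickle i) => [[r [t2|]]|]; last by exists L.
  - case: (classic (bad L r t2)) => Hb; first by exists L; split => //; left.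
    have [Q' [sg [HQ' HK]]] : exists Q' sg, sub_pnp Q' L /\ Kill sg Q' r t2.
      apply: NNPP => Hn; apply: Hb => Q' sg HQ' HK; apply: Hn; by exists Q', sg.
    by exists Q'; split => //; right; exists sg.
  - case: (classic (inhabited (HRT L r t))) => Hh; first by exists L; split => //; left.
    have [Q' [n [HQ' HP]]] := unfoldNR Hh.
    by exists Q'; split => //; right; exists n.
have [[HQs0 HQsp] HLL] := fusion_main Hpnp0 Hdense.
pose Lspec i (l : list cset) := (forall L, List.In L l -> Kt i L) /\
  forall f, Qs Q0 Kt f -> exists L, List.In L l /\
     exists m, forall h, Qs Q0 Kt h -> agree m h f -> L h.
set Qs' := Qs Q0 Kt.
pose LL i := epsilon inhL (Lspec i).
have HLLs : forall i, Lspec i (LL i) by move=> i; apply: epsilon_spec; apply: HLL.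
pose nA r L := epsilon inhN (fun n => Phi L r t n).
pose sB r t2 L := epsilon inhSg (fun sg => Kill sg L r t2).
pose codeA (r : seq E) := pickle (r, @None (seq nat)).
pose codeB (r : seq E) (t2 : seq nat) := pickle (r, Some t2).
have KtA : forall r, Kt (codeA r) = KA r by move=> r; rewrite /Kt /codeA pickleK.
have KtB : forall r t2, Kt (codeB r t2) = KB r t2 by move=> r t2; rewrite /Kt /codeB pickleK.
pose sig (r' : seq E) := maxn n0 (maxn (bmax (LL (codeA r')) (nA r'))
  (bmax (iota 0 (size r').+1) (fun j => bmax (Tk j) (fun t2 =>
     bmax (LL (codeB (take j r') t2)) (fun L => sB (take j r') t2 L r'))))).
have HQsQ : sub_pnp Qs' Q.
  split => //; apply: subs_trans HQs0 _; by case: HQ0.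
apply: (Hbad Qs' sig HQsQ).
move=> f Y x Hf HOut Hrev Hgx.
have Hp := Out_prefix HOut.
have Hsig : forall k, size p <= k -> above (sig (mkseq Y k)) (Y k) by case: HOut.
have HpnpQs : pnp Qs' by [].
have Zlem : forall (S L : cset) m1 m2,
    (forall h, Qs' h -> agree m1 h f -> S h) -> (forall h, Qs' h -> agree m2 h f -> L h) ->
    sub_pnp (cone Qs' f (maxn m1 m2)) S /\ subs (cone Qs' f (maxn m1 m2)) L.
  move=> S L m1 m2 H1 H2; split; first split.
  - move=> h [Qh Ha]; apply: H1 => //; apply: agree_le Ha; exact: leq_maxl.
  - exact: pnp_cone.
  - move=> h [Qh Ha]; apply: H2 => //; apply: agree_le Ha; exact: leq_maxr.
pose Pk := fun k => (size p < k) && (reveal x k != t).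
have Hex : exists k, Pk k.
  set m := (size t).+1.
  exists (maxn (maxn m (bnd x m)) (size p).+1); apply/andP; split; first exact: leq_maxr.
  apply/eqP => E1.
  have H1 := rlen_unb x m.
  have H2 := rlen_mono' x (leq_maxl (maxn m (bnd x m)) (size p).+1).
  have := reveal_size x (maxn (maxn m (bnd x m)) (size p).+1); rewrite E1 => E2.
  have Hm : m = (size t).+1 by []. clearbody m. lia.
case: (ex_minnP Hex) => k /andP [Hpk Hkt] Hmin.
have Hrevj : forall j, size p <= j -> j < k -> reveal x j = t.
  move=> j Hj Hjk; case: (eqVneq j (size p)) => [->//|Hne].
  apply/eqP; apply: contraTT Hjk => Hn; rewrite -leqNgt; apply: Hmin.
  by rewrite /Pk Hn andbT ltn_neqAle eq_sym Hne Hj.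
pose Dj j := exists S : cset, (exists m, forall h, Qs' h -> agree m h f -> S h) /\
  forall Q2, sub_pnp Q2 S ->
    (reveal x j <> t -> ~ bad Q2 (mkseq Y j) (reveal x j)) /\
    (reveal x j = t -> ~ inhabited (HRT Q2 (mkseq Y j) t)).
have Dbase : Dj (size p).+1.
  exists Q0; split; first by exists 0 => h Hh _; apply: HQs0.
  move=> Q2 HQ2.
  have := HPhi (Y (size p)) (reveal x (size p).+1) Q2.
  have E1 : rcons p (Y (size p)) = mkseq Y (size p).+1 by rewrite mkseqS -Hp.
  rewrite E1; apply => //.
  - by rewrite {1}Hp; apply: Out_valid HOut.
  - apply: above_mono (Hsig _ (leqnn _)); rewrite -Hp; exact: leq_maxl.
  - by rewrite -Hrev; apply: reveal_pre.
have Dstep : forall j, size p < j -> j < k -> Dj j -> Dj j.+1.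
  move=> j Hpj Hjk [S [[m1 Hm1] HS]].
  have Hrt : reveal x j = t by apply: Hrevj => //; apply: ltnW.
  have [_ Hcov] := HLLs (codeA (mkseq Y j)).
  have [L [HinL [m2 Hm2]]] := Hcov f Hf.
  have HK : Kt (codeA (mkseq Y j)) L by case: (HLLs (codeA (mkseq Y j))) => H _; apply: H.
  rewrite KtA in HK.
  have [HZS HZL] := Zlem S L m1 m2 Hm1 Hm2.
  case: HK => [HH|Hn].
    by exfalso; apply: ((HS _ HZS).2 Hrt); apply: HRT_mono' HZL HH.
  have HnA : Phi L (mkseq Y j) t (nA (mkseq Y j) L) by apply: epsilon_spec.
  exists L; split; first by exists m2.
  move=> Q2 HQ2.
  have := HnA (Y j) (reveal x j.+1) Q2; rewrite -mkseqS; apply => //.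
  - exact: Out_valid HOut.
  - apply: above_mono (Hsig _ (ltnW Hpj)).
    apply: leq_trans (bmax_ge _ HinL) _.
    by apply: leq_trans (leq_maxl _ _) (leq_maxr _ _).
  - by rewrite -Hrt; apply: reveal_pre.
have Dall : forall d, (size p).+1 + d <= k -> Dj ((size p).+1 + d).
  elim=> [|d IH] Hd; first by rewrite addn0.
  rewrite addnS; apply: Dstep; [lia | lia | apply: IH; lia].
have Dk : Dj k by have := Dall (k - (size p).+1); rewrite subnKC //; apply.
case: Dk => S [[m1 Hm1] HS].
set r := mkseq Y k; set t2 := reveal x k.
have Ht2 : t2 <> t by move=> E1; move: Hkt; rewrite /t2 in E1; rewrite E1 eqxx.
have [_ Hcov] := HLLs (codeB r t2).
have [L [HinL [m2 Hm2]]] := Hcov f Hf.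
have HK : Kt (codeB r t2) L by case: (HLLs (codeB r t2)) => H _; apply: H.
rewrite KtB in HK.
have [HZS HZL] := Zlem S L m1 m2 Hm1 Hm2.
case: HK => [Hb|[sg0 Hsg0]].
  by apply: ((HS _ HZS).1 Ht2); apply: bad_mono HZL Hb.
have HsB : Kill (sB r t2 L) L r t2 by apply: (epsilon_spec inhSg (fun sg => Kill sg L r t2)); exists sg0.
apply: (HsB f Y x) => //.
- by apply: Hm2 => //; apply: agree_refl.
- apply: (Out_shift HOut (ltnW Hpk)) => k' Hk'.
  rewrite /sig; apply: leq_trans (leq_maxr _ _); apply: leq_trans (leq_maxr _ _).
  have Hin1 : List.In k (iota 0 (size (mkseq Y k')).+1) by apply: in_iota'; rewrite size_mkseq.
  apply: (bmax_ge' Hin1) => /=.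
  apply: (bmax_ge' (reveal_Tk x k)) => /=.
  rewrite take_mkseq' //.
  exact: (bmax_ge' HinL).
- by rewrite size_mkseq.
Qed.
End Main.
Import GRing.Theory.

Fixpoint chal (i : nat) : nat * nat :=
  match i with
  | 0 => (0, 0)
  | i'.+1 => let (a, n) := chal i' in if a is a'.+1 then (a', n.+1) else (n.+1, 0)
  end.

Lemma chal_le i : (chal i).1 + (chal i).2 <= i.
Proof.
elim: i => [//|i IH] /=; case: (chal i) IH => [[|a] n] /=; lia.
Qed.

Lemma chal_diag i d j : chal i = (d, 0) -> j <= d -> chal (i + j) = (d - j, j).
Proof.
move=> Hi; elim: j => [|j IH] Hj; first by rewrite addn0 subn0.
rewrite addnS /= IH; last exact: ltnW.
by case E: (d - j) => [|dj]; [lia | congr (_, _); lia].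
Qed.

Lemma chal_start d : exists i, chal i = (d, 0).
Proof.
elim: d => [|d [i Hi]]; first by exists 0.
exists (i + d).+1; by rewrite /= (chal_diag Hi (leqnn d)) subnn.
Qed.

Lemma chal_surj a n : exists i, chal i = (a, n).
Proof.
have [i Hi] := chal_start (a + n); exists (i + n).
by rewrite (chal_diag Hi) ?leq_addl // addnK.
Qed.

Section Top.
Variable F : countFieldType.
Local Notation E := {poly F}.
Variable X : nat -> E.
Variable g : (nat -> nat) -> (nat -> bool) * (nat -> E).
Variable P : cset.
Hypothesis HP : pnp P.
Hypothesis Hcont : continuous_baire g.
Hypothesis Hbad0 : bad X g P [::] [::].

Definition NodeT := { Q : cset & { p : seq E & { t : seq nat & HRT X g Q p t } } }.
Definition nQ (nt : NodeT) := projT1 nt.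
Definition np (nt : NodeT) := projT1 (projT2 nt).
Definition ntt (nt : NodeT) := projT1 (projT2 (projT2 nt)).
Definition ntau (nt : NodeT) : HRT X g (nQ nt) (np nt) (ntt nt) := projT2 (projT2 (projT2 nt)).

Definition mkNode Q p t (T : HRT X g Q p t) : NodeT :=
  existT _ Q (existT _ p (existT _ t T)).

Definition is_child (nt nt' : NodeT) : Prop :=
  match ntau nt with
  | HRTmk ch ct cQ Hc sub => exists Q' n H e, nt' = mkNode (sub Q' n H e)
  end.

Lemma no_inf_chain (run : nat -> NodeT) : (forall k, is_child (run k) (run k.+1)) -> False.
Proof.
suff H : forall Q p t (T : HRT X g Q p t) (run : nat -> NodeT),
    run 0 = mkNode T -> (forall k, is_child (run k) (run k.+1)) -> False.
  move=> Hr; case E: (run 0) => [Q [p [t T]]]; apply: (H Q p t T run) => //.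
move=> Q p t T; elim: T => Q1 p1 t1 ch ct cQ Hc sub IH run' H0 Hr.
have := Hr 0; rewrite H0 /is_child /= => -[Q' [n [H [e E1]]]].
by apply: (IH Q' n H e (fun k => run' k.+1)).
Qed.

Definition St := (cset * (nat -> bool) * (nat -> option NodeT))%type.
Definition stR (st : St) := st.1.1.
Definition stc (st : St) := st.1.2.
Definition stN (st : St) := st.2.

Definition Inv (i : nat) (st : St) :=
  [/\ pnp (stR st), subs (stR st) P, stR st (stc st),
      subs (stR st) (fun h => agree i h (stc st)) &
      forall a, a <= i -> exists nt, stN st a = Some nt /\ subs (stR st) (nQ nt)].

Definition Step (i : nat) (st st' : St) :=
  let (a, n) := chal i in
  exists nt, stN st a = Some nt /\ exists y nt', stN st' i.+1 = Some nt' /\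
    (forall d, d != i.+1 -> stN st' d = stN st d) /\
    np nt' = rcons (np nt) y /\ valid X (np nt) y /\ above n y /\
    pre (ntt nt) (ntt nt') /\ (ntt nt' = ntt nt -> is_child nt nt') /\
    (ntt nt' <> ntt nt -> bad X g (nQ nt') (np nt') (ntt nt')) /\
    subs (stR st') (stR st).

Let inhB : inhabited (nat -> bool) := inhabits (fun _ => false).

Definition root : NodeT := mkNode (ext_inh (bad_HRT Hbad0)).
Definition c0 := epsilon inhB P.
Definition st0 : St := (P, c0, fun d => if d == 0 then Some root else None).

Lemma Inv0 : Inv 0 st0.
Proof.
split.
- exact: HP.
- by [].
- by rewrite /stR /stc /=; apply: (epsilon_spec inhB P); case: HP.
- by [].
- by move=> a; rewrite leqn0 => /eqP ->; exists root; split.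
Qed.

Lemma Step_ex i st : Inv i st -> exists st', Step i st st' /\ Inv i.+1 st'.
Proof.
move=> [HpR HRP HRc HRa Hnodes].
rewrite /Step; case Ech: (chal i) => [a n].
have Hai : a <= i by have := chal_le i; rewrite Ech /=; lia.
have [nt [Hnt HRQ]] := Hnodes a Hai.
case: nt Hnt HRQ => Q [p [t T]] Hnt HRQ.
case: T Hnt HRQ => ch ct cQ Hc sub Hnt HRQ.
have H0 : sub_pnp (stR st) Q by split.
have [Hv Hab Hpre [HQ2R HQ2p] Hbd] := Hc _ n H0.
set y := ch (stR st) n; set t2 := ct (stR st) n; set Q2 := cQ (stR st) n.
have [nt' [Hq' Hp' Ht' Hch Hbd']] : exists nt' : NodeT,
    [/\ nQ nt' = Q2, np nt' = rcons p y, ntt nt' = t2,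
     (t2 = t -> is_child (mkNode (HRTmk Hc sub)) nt') &
     (t2 <> t -> bad X g (nQ nt') (np nt') (ntt nt'))].
  case: (eqVneq t2 t) => [e|ne].
    exists (mkNode (sub (stR st) n H0 e)); split => //.
    by move=> _; rewrite /is_child /=; exists (stR st), n, H0, e.
  have Hb := Hbd (elimT negP ne \o (@introT _ _ eqP)).
  exists (mkNode (ext_inh (bad_HRT Hb))); split => //.
  by move=> /eqP; rewrite (negbTE ne).
have [c' Hc'] : exists c', Q2 c' by case: HQ2p.
have HR'R : subs (cone Q2 c' i.+1) (stR st) by move=> h [/HQ2R].
exists (cone Q2 c' i.+1, c', fun d => if d == i.+1 then Some nt' else stN st d).
split.
  exists (mkNode (HRTmk Hc sub)); split => //.
  exists y, nt'; split; first by rewrite /stN /= eqxx.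
  split; first by move=> d Hd; rewrite /stN /= (negbTE Hd).
  split; first by rewrite Hp'.
  split; first exact: Hv.
  split; first exact: Hab.
  split; first by rewrite Ht'; exact: Hpre.
  split; first by rewrite Ht'; exact: Hch.
  split; first by move=> H; apply: Hbd'; rewrite -Ht'.
  exact: HR'R.
split.
- exact: pnp_cone.
- by move=> h /HR'R /HRP.
- by split.
- by move=> h [].
- move=> d Hd; rewrite /stN /=; case: (eqVneq d i.+1) => [E|Hne].
    by subst d; exists nt'; split => //; rewrite Hq'; move=> h [].
  have Hdi : d <= i by rewrite leq_eqVlt ltnS in Hd; case/orP: Hd => // /eqP E; rewrite E eqxx in Hne.
  have [nt'' [H1 H2]] := Hnodes d Hdi.
  by exists nt''; split => //; apply: subs_trans HR'R H2.
Qed.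

Let inhSt : inhabited St := inhabits st0.

Fixpoint stage (i : nat) : St :=
  match i with
  | 0 => st0
  | i'.+1 => epsilon inhSt (fun st' => Step i' (stage i') st' /\ Inv i'.+1 st')
  end.

Lemma stage_spec i : Inv i (stage i) /\ Step i (stage i) (stage i.+1).
Proof.
elim: i => [|i [IH _]].
  split; first exact: Inv0.
  by have := epsilon_spec inhSt _ (Step_ex Inv0); case.
have H1 := epsilon_spec inhSt _ (Step_ex IH); case: H1 => H1 H2.
split => //.
by have := epsilon_spec inhSt _ (Step_ex H2); case.
Qed.

Lemma InvAll i : Inv i (stage i). Proof. by case: (stage_spec i). Qed.
Lemma StepAll i : Step i (stage i) (stage i.+1). Proof. by case: (stage_spec i). Qed.


Lemma nodes_stable a i : a <= i -> stN (stage i.+1) a = stN (stage i) a.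
Proof.
move=> Hai; have := StepAll i; rewrite /Step; case: (chal i) => a' n.
move=> [nt [_ [y [nt' [_ [Hfr _]]]]]]; apply: Hfr.
by apply/eqP => E; rewrite E ltnn in Hai.
Qed.

Lemma nodes_stable' a i j : a <= i -> i <= j -> stN (stage j) a = stN (stage i) a.
Proof.
move=> Hai Hij; rewrite -(subnKC Hij); elim: (j - i) => [|d IH]; first by rewrite addn0.
by rewrite addnS nodes_stable ?IH //; apply: leq_trans Hai (leq_addr _ _).
Qed.

Lemma R_decr1 i : subs (stR (stage i.+1)) (stR (stage i)).
Proof.
have := StepAll i; rewrite /Step; case: (chal i) => a' n.
by move=> [nt [_ [y [nt' [_ [_ [_ [_ [_ [_ [_ [_ H]]]]]]]]]]]].
Qed.

Lemma R_decr i j : i <= j -> subs (stR (stage j)) (stR (stage i)).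
Proof.
move=> Hij; rewrite -(subnKC Hij); elim: (j - i) => [|d IH]; first by rewrite addn0.
by rewrite addnS; exact: (subs_trans (R_decr1 (i := i + d)) IH).
Qed.

Definition nodeT (a : nat) : NodeT :=
  match stN (stage a) a with Some nt => nt | None => root end.

Lemma node_at j a : a <= j -> stN (stage j) a = Some (nodeT a) /\ subs (stR (stage j)) (nQ (nodeT a)).
Proof.
move=> Haj; case: (InvAll j) => _ _ _ _ /(_ a Haj) [nt [H1 H2]].
have E : stN (stage a) a = Some nt by rewrite -H1 (nodes_stable' (leqnn a) Haj).
by rewrite /nodeT E.
Qed.

Lemma nodeT0 : nodeT 0 = root. Proof. by []. Qed.

Let inhN : inhabited nat := inhabits 0.
Definition cidx (a n : nat) := epsilon inhN (fun i => chal i = (a, n)).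
Lemma cidx_spec a n : chal (cidx a n) = (a, n).
Proof. exact: (epsilon_spec inhN (fun i => chal i = (a, n)) (chal_surj a n)). Qed.
Lemma cidx_le a n : a <= cidx a n.
Proof. by have := chal_le (cidx a n); rewrite cidx_spec /=; lia. Qed.

Lemma child_lem a n : let i := cidx a n in
  exists y, [/\ np (nodeT i.+1) = rcons (np (nodeT a)) y, valid X (np (nodeT a)) y, above n y,
    pre (ntt (nodeT a)) (ntt (nodeT i.+1)) &
    (ntt (nodeT i.+1) = ntt (nodeT a) -> is_child (nodeT a) (nodeT i.+1)) /\
    (ntt (nodeT i.+1) <> ntt (nodeT a) -> bad X g (nQ (nodeT i.+1)) (np (nodeT i.+1)) (ntt (nodeT i.+1)))].
Proof.
move=> i; have := StepAll i; rewrite /Step cidx_spec.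
move=> [nt [Hnt [y [nt' [Hnt' [_ [H1 [H2 [H3 [H4 [H5 [H6 _]]]]]]]]]]]].
have [Ea _] := node_at (cidx_le a n).
rewrite Ea in Hnt; case: Hnt => E; subst nt.
have E' : nodeT i.+1 = nt' by rewrite /nodeT Hnt'.
by rewrite E'; exists y.
Qed.

Definition f0 : nat -> bool := fun k => stc (stage k.+1) k.

Lemma stc_in i : stR (stage i) (stc (stage i)).
Proof. by case: (InvAll i). Qed.

Lemma f0_in i : stR (stage i) f0.
Proof.
case: (InvAll i) => [[[Hcl _] _] _ _ _ _]; apply: Hcl => m.
exists (stc (stage (maxn i m))); split.
  apply: (R_decr (leq_maxl i m)); exact: stc_in.
move=> k Hk; rewrite /f0.
have Hin : stR (stage k.+1) (stc (stage (maxn i m))).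
  apply: (R_decr (_ : k.+1 <= maxn i m)); last exact: stc_in.
  by apply: leq_trans (leq_maxr i m).
by case: (InvAll k.+1) => _ _ _ /(_ _ Hin) Ha _; apply: Ha.
Qed.

Lemma f0_P : P f0.
Proof. by case: (InvAll 0) => _ HRP _ _ _; apply: HRP; apply: f0_in. Qed.

Section Branch.
Variable sg : strategyI F.

Fixpoint br (k : nat) : nat :=
  if k is k'.+1 then (cidx (br k') (sg (np (nodeT (br k'))))).+1 else 0.

Definition AA k := nodeT (br k).
Definition YY k := last 0%R (np (AA k.+1)).

Lemma branch_step k : [/\ np (AA k.+1) = rcons (np (AA k)) (YY k),
  valid X (np (AA k)) (YY k), above (sg (np (AA k))) (YY k),
  pre (ntt (AA k)) (ntt (AA k.+1)) &
  (ntt (AA k.+1) = ntt (AA k) -> is_child (AA k) (AA k.+1)) /\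
  (ntt (AA k.+1) <> ntt (AA k) -> bad X g (nQ (AA k.+1)) (np (AA k.+1)) (ntt (AA k.+1)))].
Proof.
have [y [H1 H2 H3 H4 H5]] := child_lem (br k) (sg (np (nodeT (br k)))).
have Ey : YY k = y by rewrite /YY /AA /= H1 last_rcons.
by rewrite Ey; split.
Qed.

Lemma np_AA k : np (AA k) = mkseq YY k.
Proof.
elim: k => [//|k IH].
by case: (branch_step k) => -> _ _ _ _; rewrite IH mkseqS.
Qed.

Lemma YY_outcomes : outcomes X sg YY.
Proof.
split.
  move=> n; split; first by case: (branch_step n) => _ [].
  case: (branch_step n.+1) => _ [_ [_ H]] _ _ _.
  by apply: H; rewrite np_AA size_mkseq.
move=> k; split; first by case: (branch_step k) => _ [_ []].
by case: (branch_step k) => _ _; rewrite np_AA.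
Qed.

Lemma prog k0 : exists k, k0 <= k /\ ntt (AA k.+1) <> ntt (AA k).
Proof.
apply: NNPP => Hn.
have Heq : forall k, k0 <= k -> ntt (AA k.+1) = ntt (AA k).
  by move=> k Hk; apply: NNPP => Hne; apply: Hn; exists k.
apply: (@no_inf_chain (fun j => AA (k0 + j))) => j.
case: (branch_step (k0 + j)) => _ _ _ _ [H _].
by rewrite addnS; apply: H; apply: Heq; apply: leq_addr.
Qed.

Lemma pre_AA k k' : k <= k' -> pre (ntt (AA k)) (ntt (AA k')).
Proof.
move=> Hk; rewrite -(subnKC Hk); elim: (k' - k) => [|d IH]; first by rewrite addn0; apply: pre_refl.
rewrite addnS; apply: pre_trans IH _; by case: (branch_step (k + d)).
Qed.

Lemma size_unb m : exists k, m <= size (ntt (AA k)).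
Proof.
elim: m => [|m [k Hk]]; first by exists 0.
have [k' [Hk' Hne]] := prog k.
exists k'.+1.
have H1 := pre_size (pre_AA Hk').
have H2 : size (ntt (AA k')) < size (ntt (AA k'.+1)).
  by apply: pre_neq => //; case: (branch_step k').
lia.
Qed.

Lemma big_bad m k0 : exists k, [/\ k0 <= k, m <= size (ntt (AA k.+1)) &
  bad X g (nQ (AA k.+1)) (np (AA k.+1)) (ntt (AA k.+1))].
Proof.
have [k1 Hk1] := size_unb m.
have [k [Hk Hne]] := prog (maxn k0 k1).
exists k; split.
- by apply: leq_trans Hk; apply: leq_maxl.
- apply: leq_trans Hk1 _; apply: pre_size; apply: pre_AA.
  by apply: leq_trans (leq_maxr k0 k1) (leq_trans Hk (leqnSn _)).
- by case: (branch_step k) => _ _ _ _ [_ H]; apply: H.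
Qed.

Definition Kx i := epsilon inhN (fun k => i < size (ntt (AA k))).
Definition xx i := nth 0 (ntt (AA (Kx i))) i.

Lemma Kx_spec i : i < size (ntt (AA (Kx i))).
Proof. exact: (epsilon_spec inhN (fun k => i < size (ntt (AA k))) (size_unb i.+1)). Qed.

Lemma xx_ok k i : i < size (ntt (AA k)) -> nth 0 (ntt (AA k)) i = xx i.
Proof.
move=> Hi; rewrite /xx; case: (leqP k (Kx i)) => Hk.
- by rewrite (pre_nth (pre_AA Hk) Hi).
- by rewrite (pre_nth (pre_AA (ltnW Hk)) (Kx_spec i)).
Qed.

Lemma closure_g : g xx = (f0, YY).
Proof.
suff H : forall i, (g xx).1 i = f0 i /\ (g xx).2 i = YY i.
  case E: (g xx) => [a b]; congr (_, _); apply: functional_extensionality => i;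
    have := H i; rewrite E /= => -[H1 H2]; first [exact: H1 | exact: H2].
move=> i; have [m Hm] := Hcont xx i.+1.
have [k [Hk Hsz Hbad]] := big_bad m i.+1.
set aa := br k.+1.
set j := maxn aa i.+1.
have [_ HRQ] := node_at (leq_maxl aa i.+1 : aa <= j).
have HRp : pnp (stR (stage j)) by case: (InvAll j).
have : ~ Kill X g (fun _ => 0) (stR (stage j)) (np (AA k.+1)) (ntt (AA k.+1)).
  by apply: Hbad; split.
move=> NK.
have [f' [Y' [x' [Hf' [HO [Hrv Hg]]]]]] : exists f' Y' x', stR (stage j) f' /\
    Out X (fun _ => 0) (np (AA k.+1)) Y' /\ reveal x' (size (np (AA k.+1))) = ntt (AA k.+1) /\
    g x' = (f', Y').
  apply: NNPP => Hn; apply: NK => f' Y' x' H1 H2 H3 H4; apply: Hn; by exists f', Y', x'.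
have Hag : agree m x' xx.
  move=> i' Hi'.
  have Hi2 : i' < size (ntt (AA k.+1)) by apply: leq_trans Hi' Hsz.
  rewrite -(xx_ok Hi2) -Hrv reveal_nth //; by rewrite Hrv.
have [A1 A2] := Hm x' Hag.
rewrite Hg /= in A1 A2.
split.
- rewrite -A1 //.
  case: (InvAll j) => _ _ _ Hcone _.
  have Hj : i < j by apply: leq_trans (leqnn _) (leq_maxr aa i.+1).
  by rewrite (Hcone _ Hf' i Hj) (Hcone _ (f0_in j) i Hj).
- rewrite -A2 //.
  case: HO => Hpre _ _ _.
  rewrite Hpre; last by rewrite np_AA size_mkseq; lia.
  by rewrite np_AA nth_mkseq //; lia.
Qed.
End Branch.

Lemma top_main : exists f, P f /\ forall sg : strategyI F, exists Y x, outcomes X sg Y /\ g x = (f, Y).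
Proof.
exists f0; split; first exact: f0_P.
move=> sg; exists (YY sg), (xx sg); split; [exact: YY_outcomes | exact: closure_g].
Qed.
End Top.

Lemma outcomes_Out (F : countFieldType) (X : nat -> {poly F}) sg Y :
  outcomes X sg Y -> Out X sg [::] Y.
Proof. by move=> [Hb Hk]; split => // k; case: (Hk k). Qed.

Theorem lemma5p2 (F : countFieldType)
  (A : (nat -> bool) * (nat -> {poly F}) -> Prop)
  (P : (nat -> bool) -> Prop) (X : nat -> {poly F}) :
  (forall f Y, A (f, Y) -> block_seq Y) ->
  analytic A ->
  (exists f, P f) -> perfect_cantor P ->
  block_seq X ->
  (forall f, P f -> exists sigma : strategyI F,
       plays_out_of X sigma (fun Y => A (f, Y))) ->
  exists (Q : (nat -> bool) -> Prop) (sigma : strategyI F),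
    (forall f, Q f -> P f) /\ (exists f, Q f) /\ perfect_cantor Q /\
    forall f Y, Q f -> outcomes X sigma Y -> ~ A (f, Y).
Proof.
move=> HAb Han HPne HPp HX Hstr.
case: Han => [Hempty | [g [Hcont HAg]]].
  exists P, (fun _ => 0); split => //; split => //; split => //.
apply: NNPP => Hn.
have Hbad0 : bad X g P [::] [::].
  move=> Q' sg [HQ'P [HQ'p HQ'ne]] HK; apply: Hn; exists Q', sg.
  split => //; split => //; split => //.
  move=> f Y Hf HO HA.
  have [x Hx] : exists x, g x = (f, Y) by apply/HAg.
  apply: (HK f Y x Hf (outcomes_Out HO)) => //.
have HPpnp : pnp P by split.
have [f [Pf Hall]] := top_main HPpnp Hcont Hbad0.
have [sg Hsg] := Hstr f Pf.
have [Y [x [HO Hg]]] := Hall sg.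
by apply: (Hsg Y HO); apply/HAg; exists x.
Qed.
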